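(* Let $\mathcal N$ be a $d$-dimensional real normed space with norm $\|\cdot\|$, let $k\in\mathbb N$, and let $c_1,\dots,c_m$ be $m$ distinct points of $\mathcal N$, with $m\geq 2$ and $m\geq k+1$. Then the $k$-th closed sphere-of-influence graph on $\{c_1,\dots,c_m\}$ has at least two vertices of degree smaller than $\vartheta(\mathcal N)\,k$, and $\vartheta(\mathcal N)\,k\leq 5^d k$.
   Context: For $c\in\mathcal N$ and $r\geq 0$, $B(c,r)=\{x\in\mathcal N:\|x-c\|\leq r\}$ is the closed ball. For each $i\in\{1,\dots,m\}$, let $r_i^{(k)}$ be the smallest $r$ such that the set $\{j\in\{1,\dots,m\}: j\neq i,\ \|c_i-c_j\|\leq r\}$ has at least $k$ elements (this requires $m\geq k+1$). The $k$-th closed sphere-of-influence graph on $\{c_1,\dots,c_m\}$ has vertex set $\{c_1,\dots,c_m\}$, and $c_i$, $c_j$ ($i\neq j$) are adjacent whenever $B(c_i,r_i^{(k)})\cap B(c_j,r_j^{(k)})\neq\emptyset$. The quantity $\vartheta(\mathcal N)$ is the largest number of points in the ball $B(o,2)$ ($o$ the origin) such that any two of the points are at distance at least $1$ and one of the points is $o$. *)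

(* Defs.v *)
From HB Require Import structures.
From mathcomp Require Import all_boot all_order all_algebra.
From mathcomp Require Import boolp classical_sets reals.
Set Implicit Arguments. Unset Strict Implicit. Unset Printing Implicit Defensive.
Import Order.TTheory GRing.Theory Num.Theory.
Local Open Scope ring_scope.

(* A d-dimensional real normed space is modelled (up to linear isometry)
   as 'rV[R]_d equipped with an arbitrary norm N. *)
Definition is_norm (R : realType) (d : nat) (N : 'rV[R]_d -> R) : Prop :=
  [/\ forall x, N x = 0 -> x = 0,
      forall (a : R) x, N (a *: x) = `|a| * N x
    & forall x y, N (x + y) <= N x + N y].

Definition cball (R : realType) (d : nat) (N : 'rV[R]_d -> R)
  (c : 'rV[R]_d) (r : R) : set 'rV[R]_d := [set x | N (x - c) <= r].

Definition nb_within (R : realType) (d m : nat) (N : 'rV[R]_d -> R)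
  (c : 'I_m -> 'rV[R]_d) (i : 'I_m) (r : R) : nat :=
  #|[set j : 'I_m | (j != i) && (N (c i - c j) <= r)]|.

(* r_i^{(k)} : the smallest r >= 0 with at least k other centres within r
   (the set is an up-closed ray [r_i^{(k)}, oo), so its infimum is its minimum) *)
Definition rk (R : realType) (d m : nat) (N : 'rV[R]_d -> R)
  (c : 'I_m -> 'rV[R]_d) (k : nat) (i : 'I_m) : R :=
  inf [set r : R | 0 <= r /\ (k <= nb_within N c i r)%N].

Definition csig_adj (R : realType) (d m : nat) (N : 'rV[R]_d -> R)
  (c : 'I_m -> 'rV[R]_d) (k : nat) (i j : 'I_m) : Prop :=
  i <> j /\
  ((cball N (c i) (rk N c k i) `&` cball N (c j) (rk N c k j)) !=set0)%classic.

Definition csig_deg (R : realType) (d m : nat) (N : 'rV[R]_d -> R)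
  (c : 'I_m -> 'rV[R]_d) (k : nat) (i : 'I_m) : nat :=
  #|[set j : 'I_m | `[< csig_adj N c k i j >]]|.

Definition theta_config (R : realType) (d : nat) (N : 'rV[R]_d -> R)
  (n : nat) : Prop :=
  exists p : 'I_n -> 'rV[R]_d,
    [/\ exists i, p i = 0,
        forall i, N (p i) <= 2
      & forall i j, i <> j -> 1 <= N (p i - p j)].

Definition is_theta (R : realType) (d : nat) (N : 'rV[R]_d -> R) (t : nat) : Prop :=
  theta_config N t /\ forall n, theta_config N n -> (n <= t)%N.

(* Main.v *)
Require Import Defs.
From HB Require Import structures.
From mathcomp Require Import all_boot all_order all_algebra.
From mathcomp Require Import boolp classical_sets reals zify ring lra.
From mathcomp Require Import topology normedtype derive.
Set Implicit Arguments. Unset Strict Implicit. Unset Printing Implicit Defensive.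
Import Order.TTheory GRing.Theory Num.Theory numFieldNormedType.Exports.
Local Open Scope ring_scope.


Lemma fin_argmax (R : realType) (T : finType) (S : {set T}) (f : T -> R) :
  S != finset.set0 -> exists2 j0, j0 \in S & forall j, j \in S -> f j <= f j0.
Proof.
case/finset.set0Pn=> j1 Hj1.
case: (@arg_maxP _ R _ j1 (mem S) f Hj1) => j0 Hj0 Hm.
by exists j0.
Qed.

Lemma fin_argmin (R : realType) (T : finType) (S : {set T}) (f : T -> R) :
  S != finset.set0 -> exists2 j0, j0 \in S & forall j, j \in S -> f j0 <= f j.
Proof.
move=> /(@fin_argmax R T S (fun j => - f j)) [j0 H1 H2]; exists j0 => // j /H2.
by rewrite lerN2.
Qed.

Section NormFacts.
Variables (R : realType) (d : nat) (N : 'rV[R]_d -> R).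
Hypothesis hN : is_norm N.

Lemma N0 : N 0 = 0.
Proof. case: hN => _ hZ _; by rewrite -(scale0r 0) hZ normr0 mul0r. Qed.

Lemma NN x : N (- x) = N x.
Proof. case: hN => _ hZ _; by rewrite -scaleN1r hZ normrN normr1 mul1r. Qed.

Lemma NB x y : N (x - y) = N (y - x).
Proof. by rewrite -NN opprB. Qed.

Lemma Ntri x y : N (x + y) <= N x + N y.
Proof. by case: hN. Qed.

Lemma NZ a x : N (a *: x) = `|a| * N x.
Proof. by case: hN. Qed.

Lemma Nge0 x : 0 <= N x.
Proof.
have := Ntri x (- x); rewrite subrr N0 NN => h.
have : 0 <= N x *+ 2 by rewrite mulr2n.
by rewrite pmulrn_lge0.
Qed.

Lemma Ngt0 x : x != 0 -> 0 < N x.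
Proof.
move=> hx; rewrite lt_neqAle Nge0 andbT; apply/eqP => h.
case: hN => h0 _ _; by move/eqP: hx; apply; apply: h0.
Qed.

Lemma Nsub_tri x y z : N (x - z) <= N (x - y) + N (y - z).
Proof. by have := Ntri (x - y) (y - z); rewrite addrA subrK. Qed.

Lemma Nrev x y : N x - N y <= N (x - y).
Proof. by rewrite lerBlDr; have := Ntri (x - y) y; rewrite subrK. Qed.

End NormFacts.


Section Radii.
Variables (R : realType) (d m : nat) (N : 'rV[R]_d -> R) (c : 'I_m -> 'rV[R]_d) (k : nat).
Hypothesis hN : is_norm N.
Hypothesis hc : injective c.
Hypothesis hk : (1 <= k)%N.
Hypothesis hkm : (k.+1 <= m)%N.

Let r i := rk N c k i.

Lemma card_other i : #|[set j : 'I_m | j != i]| = m.-1.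
Proof.
have -> : [set j : 'I_m | j != i] = [set~ i] by apply/finset.setP => j; rewrite !inE.
by rewrite cardsC1 card_ord.
Qed.

Lemma nb_mono i r1 r2 : r1 <= r2 -> (nb_within N c i r1 <= nb_within N c i r2)%N.
Proof.
move=> h; apply: subset_leq_card; apply/fintype.subsetP => j.
rewrite !inE => /andP[-> /le_trans]; exact.
Qed.

Lemma E_lb i : lbound [set r : R | 0 <= r /\ (k <= nb_within N c i r)%N] 0.
Proof. by move=> y []. Qed.

Lemma E_hlb i : has_lbound [set r : R | 0 <= r /\ (k <= nb_within N c i r)%N].
Proof. by exists 0; apply: E_lb. Qed.

Lemma E_ne i : nonempty [set r : R | 0 <= r /\ (k <= nb_within N c i r)%N].
Proof.
exists (\sum_j N (c i - c j)); split.
  by apply: sumr_ge0 => j _; apply: (Nge0 hN).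
have -> : nb_within N c i (\sum_j N (c i - c j)) = m.-1.
  rewrite -(card_other i); apply: eq_card => j; rewrite !inE; case: (j != i) => //=.
  rewrite (bigD1 j) //= lerDl; apply: sumr_ge0 => l _; apply: (Nge0 hN).
move: hkm; clear; lia.
Qed.

Lemma rk_open i : (#|[set j | (j != i) && (N (c i - c j) < r i)%R]| < k)%N.
Proof.
set S := [set j | _].
rewrite ltnNge; apply/negP => hS.
have : S != finset.set0.
  by rewrite -card_gt0 (leq_trans hk hS).
case/(@fin_argmax R _ S (fun j => N (c i - c j))) => j0 Hj0 Hmax.
have hE : [set r : R | 0 <= r /\ (k <= nb_within N c i r)%N]%classic (N (c i - c j0)).
  split; first exact: (Nge0 hN).
  apply: (leq_trans hS); apply: subset_leq_card; apply/fintype.subsetP => j.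
  move=> hj; move: (hj); rewrite !inE => /andP[-> _] /=.
  exact: Hmax.
have := ge_inf (E_hlb i) hE.
move: Hj0; rewrite inE => /andP[_ h1] h2.
by move: (lt_le_trans h1 h2); rewrite ltxx.
Qed.

Lemma rk_gt0 i : 0 < r i.
Proof.
have hne : [set j : 'I_m | j != i] != finset.set0.
  by rewrite -card_gt0 card_other; move: hkm hk; clear; lia.
case/(@fin_argmin R _ _ (fun j => N (c i - c j))): hne => j0 Hj0 Hmin.
have hpos : 0 < N (c i - c j0).
  apply: (Ngt0 hN); rewrite subr_eq0; apply/negP => /eqP /hc h.
  by move: Hj0; rewrite inE h eqxx.
apply: (lt_le_trans hpos); apply: lb_le_inf; first exact: E_ne.
move=> y [y0 hy].
have : [set j | (j != i) && (N (c i - c j) <= y)] != finset.set0.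
  by rewrite -card_gt0 (leq_trans hk hy).
case/finset.set0Pn => j; rewrite inE => /andP[hj hjy].
by apply: le_trans hjy; apply: Hmin; rewrite inE.
Qed.

Lemma adj_dist i j : csig_adj N c k i j -> N (c i - c j) <= r i + r j.
Proof.
case=> _ [x [h1 h2]].
rewrite /cball /= in h1 h2.
apply: le_trans (Nsub_tri hN _ x _) _.
by rewrite (NB hN) lerD.
Qed.

End Radii.


Section Proj.
Variables (R : realType) (d : nat) (N : 'rV[R]_d -> R).
Hypothesis hN : is_norm N.

Definition proj2 (x : 'rV[R]_d) := if N x <= 2 then x else (2 / N x) *: x.

Lemma NZpos a x : 0 <= a -> N (a *: x) = a * N x.
Proof. by move=> ha; rewrite (NZ hN) ger0_norm. Qed.

Lemma proj_big x : 2 < N x -> N (proj2 x) = 2.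
Proof.
move=> hx; rewrite /proj2 leNgt hx /= NZpos; last first.
  by rewrite divr_ge0 // ltW // (lt_trans _ hx).
by rewrite divfK // gt_eqF // (lt_trans _ hx).
Qed.

Lemma proj_le2 x : N (proj2 x) <= 2.
Proof.
case: (leP (N x) 2) => h; first by rewrite /proj2 h.
by rewrite proj_big.
Qed.

Lemma proj_ge1 x : 1 <= N x -> 1 <= N (proj2 x).
Proof.
case: (leP (N x) 2) => h; first by rewrite /proj2 h.
by rewrite proj_big // ler1n.
Qed.

Lemma N_shrink a y : 0 <= a <= 1 -> N (y - a *: y) = (1 - a) * N y.
Proof.
case/andP=> h0 h1.
have -> : y - a *: y = (1 - a) *: y by rewrite scalerBl scale1r.
by rewrite NZpos // subr_ge0.
Qed.

Lemma proj_mixed x y : N x <= 2 -> 2 < N y -> N y - 1 <= N (x - y) ->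
  1 <= N (x - proj2 y).
Proof.
move=> hx hy hxy.
have y0 : 0 < N y by rewrite (lt_trans _ hy).
have hP : proj2 y = (2 / N y) *: y by rewrite /proj2 leNgt hy.
have ha : 0 <= 2 / N y <= 1.
  apply/andP; split; first by rewrite divr_ge0 // ltW.
  by rewrite ler_pdivrMr // mul1r ltW.
have e1 : N (y - proj2 y) = N y - 2.
  by rewrite hP N_shrink // mulrBl mul1r divfK ?gt_eqF.
have := Nsub_tri hN x (proj2 y) y.
rewrite (NB hN (proj2 y)) e1 => h.
lra.
Qed.

Lemma proj_both x y : 2 < N x -> N x <= N y -> N y - 1 <= N (x - y) ->
  1 <= N (proj2 x - proj2 y).
Proof.
move=> hx hxy hd.
set a := N x; set b := N y.
have a0 : 0 < a by rewrite (lt_trans _ hx).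
have b0 : 0 < b by rewrite (lt_le_trans a0).
have hy : 2 < b by rewrite (lt_le_trans hx).
have hPx : proj2 x = (2 / a) *: x by rewrite /proj2 leNgt hx.
have hPy : proj2 y = (2 / b) *: y by rewrite /proj2 leNgt hy.
set y' := (a / b) *: y.
have hab : 0 <= a / b <= 1.
  apply/andP; split; first by rewrite divr_ge0 // ltW.
  by rewrite ler_pdivrMr // mul1r.
have e1 : N (y - y') = b - a by rewrite N_shrink // mulrBl mul1r divfK ?gt_eqF.
have h2 : a - 1 <= N (x - y').
  have := Nsub_tri hN x y' y; rewrite (NB hN y') e1 => h.
  rewrite /a /b in h *; lra.
have e2 : proj2 x - proj2 y = (2 / a) *: (x - y').
  rewrite hPx hPy scalerBr /y' scalerA; congr (_ - _).
  by rewrite mulrA divfK ?gt_eqF.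
rewrite e2 NZpos; last by rewrite divr_ge0 // ltW.
have h3 := ler_wpM2l (divr_ge0 (ler0n R 2) (ltW a0)) h2.
apply: le_trans h3.
have ha1 : 2 / a <= 1 by rewrite ler_pdivrMr // mul1r ltW.
rewrite mulrBr divfK ?gt_eqF // mulr1; lra.
Qed.

Lemma proj_sep x y : 1 <= N x -> 1 <= N y -> 1 <= N (x - y) ->
  N x - 1 <= N (x - y) -> N y - 1 <= N (x - y) ->
  1 <= N (proj2 x - proj2 y).
Proof.
move=> hx hy h1 h2 h3.
case: (leP (N x) 2) => hx2; case: (leP (N y) 2) => hy2.
- by rewrite /proj2 hx2 hy2.
- by rewrite {1}/proj2 hx2; apply: proj_mixed.
- rewrite (NB hN) {1}/proj2 hy2; apply: proj_mixed => //; by rewrite (NB hN).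
case: (leP (N x) (N y)) => hxy.
  by apply: proj_both.
rewrite (NB hN); apply: proj_both => //; first exact: ltW.
by rewrite (NB hN).
Qed.

End Proj.


Section Greedy.
Variables (R : realType) (d m : nat) (N : 'rV[R]_d -> R) (c : 'I_m -> 'rV[R]_d) (k : nat).
Hypothesis hN : is_norm N.
Hypothesis hc : injective c.
Hypothesis hk : (1 <= k)%N.
Hypothesis hkm : (k.+1 <= m)%N.

Let r i := rk N c k i.

Definition sepset (I : {set 'I_m}) := forall j l, j \in I -> l \in I -> j != l ->
  r j <= N (c j - c l) /\ r l <= N (c j - c l).

Lemma card_le_union (A B : {set 'I_m}) : (#|A :|: B| <= #|A| + #|B|)%N.
Proof. by rewrite cardsU leq_subr. Qed.

Lemma greedy n (A : {set 'I_m}) : (#|A| <= n)%N ->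
  exists I : {set 'I_m}, [/\ I \subset A, (#|A| <= k * #|I|)%N & sepset I].
Proof.
elim: n A => [|n IH] A hA.
  exists finset.set0; split; first by rewrite finset.sub0set.
    by move: hA; rewrite leqn0 => /eqP ->.
  by move=> j l; rewrite inE.
case: (eqVneq A finset.set0) => [->|hA0].
  exists finset.set0; split; first by rewrite finset.sub0set.
    by rewrite cards0.
  by move=> j l; rewrite inE.
case: (@fin_argmax R _ A r hA0) => v hv hmax.
set C := [set u in A | (u != v) && (N (c v - c u) < r v)%R].
set A' := A :\: (v |: C).
have hA' : (#|A'| <= n)%N.
  have : (#|A'| <= #|A :\ v|)%N.
    apply: subset_leq_card; apply/fintype.subsetP => u; rewrite !inE.
    by case/andP => /norP [-> _] ->.
  by move: hA; rewrite (cardsD1 v A) hv /= add1n ltnS => h1 h2; apply: leq_trans h2 h1.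
case: (IH A' hA') => I' [hI'A' hcard hsep].
have vI' : v \notin I'.
  apply/negP => /(fintype.subsetP hI'A'); by rewrite !inE eqxx.
have hC : (#|C| < k)%N.
  apply: (leq_ltn_trans _ (rk_open c hN hk v)).
  apply: subset_leq_card; apply/fintype.subsetP => u; rewrite !inE.
  by case/andP => _ ->.
exists (v |: I'); split.
- rewrite finset.subUset finset.sub1set hv /=; apply: fintype.subset_trans hI'A' _.
  by apply: finset.subsetDl.
- rewrite cardsU1 vI' /= mulnDr muln1 addnC.
  have h1 : A \subset A' :|: (v |: C).
    apply/fintype.subsetP => u hu; rewrite !inE hu.
    by case: (u == v); case: (N (c v - c u) < r v).
  apply: leq_trans (subset_leq_card h1) _.
  apply: leq_trans (card_le_union _ _) _.
  apply: leq_add => //.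
  by rewrite cardsU1; apply: leq_trans (leq_add (leq_b1 _) (leqnn _)) _; rewrite add1n.
- have key : forall u, u \in I' -> r v <= N (c v - c u) /\ r u <= N (c v - c u).
    move=> u /(fintype.subsetP hI'A'); rewrite !inE negb_or => /andP[/andP[uv uC] uA].
    move: uC; rewrite uA uv /= -leNgt => h.
    split => //; apply: le_trans h; exact: hmax.
  move=> j l; rewrite !inE => /orP[/eqP->|hj] /orP[/eqP->|hl]; rewrite ?eqxx //.
  + by move=> _; apply: key.
  + by move=> _; rewrite (NB hN); case: (key j hj).
  + exact: hsep.
Qed.


Lemma deg_bound i t : is_theta N t ->
  (forall j l, j != l -> j != i -> l != i -> r i <= r j \/ r i <= r l) ->
  (csig_deg N c k i < t * k)%N.
Proof.
move=> [_ htmax] hsmall.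
set Nb := [set j | `[< csig_adj N c k i j >]].
have adjP : forall j, j \in Nb -> csig_adj N c k i j.
  by move=> j; rewrite inE => /asboolP.
set Far := [set j in Nb | r i <= N (c i - c j)].
set Cl := [set j in Nb | N (c i - c j) < r i].
have hCl : (#|Cl| < k)%N.
  apply: (leq_ltn_trans _ (rk_open c hN hk i)).
  apply: subset_leq_card; apply/fintype.subsetP => j; rewrite !inE.
  case/andP => /asboolP [hij _] ->; rewrite andbT; apply/eqP => hji; apply: hij.
  by rewrite hji.
have hNb : (#|Nb| <= #|Far| + #|Cl|)%N.
  apply: leq_trans (card_le_union _ _); apply: subset_leq_card.
  apply/fintype.subsetP => j hj; rewrite !inE; move: hj; rewrite inE => ->.
  by case: leP.
case: (greedy (leqnn #|Far|)) => I [hIF hcardF hsepI].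
have ri0 : 0 < r i by apply: (rk_gt0 hN hc hk hkm).
set s := (r i)^-1.
have s0 : 0 <= s by rewrite invr_ge0 ltW.
pose x j := s *: (c j - c i).
have hx : forall j, N (x j) = N (c j - c i) / r i.
  by move=> j; rewrite /x NZpos // mulrC.
have hxx : forall j l, N (x j - x l) = N (c j - c l) / r i.
  move=> j l; rewrite /x -scalerBr NZpos // mulrC; congr (N _ / _).
  by rewrite opprB addrA subrK.
have inI : forall j, j \in I -> csig_adj N c k i j /\ r i <= N (c j - c i).
  move=> j /(fintype.subsetP hIF); rewrite !inE => /andP[/asboolP h1 h2].
  by split => //; rewrite (NB hN).
have key : forall j l, j \in I -> l \in I -> j != l ->
    N (x j) - 1 <= N (x j - x l) /\ 1 <= N (x j - x l).
  move=> j l hj hl hjl.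
  have [[hij _] _] := inI j hj; have [[hil _] _] := inI l hl.
  have [s1 s2] := hsepI j l hj hl hjl.
  rewrite hx hxx; split.
    have -> : N (c j - c i) / r i - 1 = (N (c j - c i) - r i) / r i.
      by rewrite mulrBl divff // gt_eqF.
    rewrite ler_pM2r ?invr_gt0 //; have := adj_dist hN (inI j hj).1.
    rewrite (NB hN) => h; lra.
  rewrite ler_pdivlMr // mul1r.
  have ji : j != i by apply/eqP => e; apply: hij; rewrite e.
  have li : l != i by apply/eqP => e; apply: hil; rewrite e.
  case: (hsmall j l hjl ji li) => h.
    exact: le_trans h s1.
  exact: le_trans h s2.
pose p := fun a : 'I_(#|I|.+1) =>
  if unlift ord0 a is Some b then proj2 N (x (enum_val b)) else 0.
have hp : theta_config N #|I|.+1.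
  exists p; split.
  - by exists ord0; rewrite /p unlift_none.
  - move=> a; rewrite /p; case: (unlift ord0 a) => [b|].
      exact: proj_le2.
    by rewrite (N0 hN) ler0n.
  - have gx : forall b, 1 <= N (x (@enum_val _ (mem I) b)).
      move=> b; rewrite hx ler_pdivlMr // mul1r.
      exact: (inI _ (enum_valP b)).2.
    move=> a a'; rewrite /p.
    case: unliftP => [b ->|->]; case: unliftP => [b' ->|->];
      rewrite ?liftK ?unlift_none.
    + move=> hbb.
      have hb : b != b' by apply/eqP => e; apply: hbb; rewrite e.
      set j := enum_val b; set l := enum_val b'.
      have hjl : j != l by apply: contra hb => /eqP /enum_val_inj ->.
      have hj : j \in I := enum_valP b.
      have hl : l \in I := enum_valP b'.
      have [k1 k2] := key j l hj hl hjl.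
      have [k3 _] := key l j hl hj ltac:(by rewrite eq_sym).
      apply: (proj_sep hN) => //; try apply: gx.
      by rewrite (NB hN).
    + by move=> _; rewrite subr0; apply: proj_ge1 => //; apply: gx.
    + by move=> _; rewrite sub0r (NN hN); apply: proj_ge1 => //; apply: gx.
    + by [].
have hIt := htmax _ hp.
rewrite /csig_deg -/Nb.
apply: (leq_ltn_trans hNb); apply: (@leq_trans (k * #|I|.+1)); last first.
  by rewrite mulnC; apply: leq_mul.
rewrite mulnS; move: hcardF hCl; move: (#|Far|) (#|Cl|) (k * #|I|)%N => a b e; clear; lia.
Qed.

End Greedy.


Section Equiv.
Variables (R : realType) (d : nat) (N : 'rV[R]_d -> R).
Hypothesis hN : is_norm N.
Local Open Scope classical_set_scope.

Lemma coord_le (x : 'rV[R]_d) i : `|x ord0 i| <= `|x|.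
Proof.
rewrite [X in _ <= X]mx_normrE.
exact: (le_bigmax _ (fun ij : 'I_1 * 'I_d => `|x ij.1 ij.2|) (ord0, i)).
Qed.

Lemma norm_lt_coord (x : 'rV[R]_d) e : 0 < e -> (forall i, `|x ord0 i| < e) -> `|x| < e.
Proof.
move=> e0 h; rewrite [X in X < _]mx_normrE; apply/bigmax_ltP; split => // -[a b] _ /=.
by rewrite (ord1 a).
Qed.

Lemma N_sum (I : Type) (r : seq I) (F : I -> 'rV[R]_d) :
  N (\sum_(i <- r) F i) <= \sum_(i <- r) N (F i).
Proof.
elim/big_ind2: _ => [|a b a' b' h1 h2|i _]; first by rewrite (N0 hN).
  exact: (le_trans (Ntri hN b b') (lerD h1 h2)).
by [].
Qed.

Lemma N_le_beta : exists2 b, 0 < b & forall x, N x <= b * `|x|.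
Proof.
exists (1 + \sum_(j < d) N (delta_mx 0 j)).
  by rewrite ltr_wpDr // sumr_ge0 // => j _; apply: (Nge0 hN).
move=> x; rewrite {1}(row_sum_delta x).
apply: le_trans (N_sum _ _) _.
rewrite mulrDl mul1r mulr_suml.
apply: ler_wpDl; first exact: normr_ge0.
apply: ler_sum => j _; rewrite (NZ hN) mulrC.
by apply: ler_wpM2l; [apply: (Nge0 hN) | apply: coord_le].
Qed.

Lemma N_cont : continuous N.
Proof.
have [b b0 hb] := N_le_beta.
move=> x; have FF : Filter (nbhs x) by apply: nbhs_filter.
apply/cvgrPdist_lt => e e0.
apply/(@nbhs_normP R 'rV[R]_d x); exists (e / b); first by rewrite /= divr_gt0.
move=> t /= ht.
have h1 : `|N x - N t| <= N (x - t).
  rewrite ler_norml (Nrev hN) andbT lerNl opprB (NB hN).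
  exact: (Nrev hN).
apply: le_lt_trans h1 _; apply: le_lt_trans (hb _) _.
by rewrite -ltr_pdivlMl // mulrC.
Qed.


Lemma N_ge_alpha : (0 < d)%N -> exists2 a, 0 < a & forall x, a * `|x| <= N x.
Proof.
move=> hd.
set S := [set x : 'rV[R]_d | `|x| = 1]%classic.
have S0 : (S !=set0)%classic.
  set v : 'rV[R]_d := const_mx 1.
  have v0 : v != 0.
    apply/eqP => /matrixP /(_ ord0 (Ordinal hd)); rewrite !mxE => /eqP.
    by rewrite oner_eq0.
  exists (`|v|^-1 *: v); rewrite /S /= normrZ normfV normr_id mulVf //.
  by rewrite normr_eq0.
have Sc : compact S.
  apply: bounded_closed_compact.
    exists 1; split => // M hM y /= hy; rewrite hy; exact: ltW.
  have -> : S = ((Num.norm : 'rV[R]_d -> R) @^-1` [set x | x = 1])%classic by [].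
  apply: closed_comp; last exact: closed_eq.
  move=> y _; exact: norm_continuous.
have Scont : {within S, continuous N} by apply: continuous_subspaceT; apply: N_cont.
case: (EVT_min_rV S0 Sc Scont) => c0; rewrite inE /S /= => hc0 hmin.
exists (N c0).
  apply: (Ngt0 hN); apply/eqP => h; move: hc0; rewrite h normr0 => /eqP.
  by rewrite eq_sym oner_eq0.
move=> x; case: (eqVneq x 0) => [->|x0]; first by rewrite normr0 mulr0 (N0 hN).
have nx : 0 < `|x| by rewrite normr_gt0.
have := hmin (`|x|^-1 *: x).
rewrite inE /S /= normrZ normfV normr_id mulVf ?gt_eqF // => /(_ erefl).
rewrite (NZ hN) normfV normr_id => h.
by rewrite -ler_pdivlMr // mulrC.
Qed.

End Equiv.


Section Grid.
Variables (R : realType) (d : nat).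

Lemma grid_count (T : finType) (q : T -> 'rV[R]_d) (B e : R) (K : nat) :
  0 < e -> (forall a, `|q a| <= B) ->
  (forall a b, a != b -> e <= `|q a - q b|) -> 2 * B / e <= K%:R ->
  (#|T| <= K.+1 ^ d)%N.
Proof.
move=> e0 hB hsep hK.
pose y a i := (q a ord0 i + B) / e.
have y0 : forall a i, 0 <= y a i.
  move=> a i; rewrite /y divr_ge0 //; last exact: ltW.
  have := le_trans (coord_le (q a) i) (hB a); rewrite ler_norml => /andP[h1 h2]. lra.
have yK : forall a i, y a i <= K%:R.
  move=> a i; apply: le_trans hK; rewrite /y ler_pM2r ?invr_gt0 //.
  have := le_trans (coord_le (q a) i) (hB a); rewrite ler_norml => /andP[? ?]; lra.
pose f a : {ffun 'I_d -> 'I_K.+1} := [ffun i => inord (Num.truncn (y a i))].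
have tK : forall a i, (Num.truncn (y a i) <= K)%N.
  by move=> a i; rewrite truncn_le_nat (le_lt_trans (yK a i)) // ltr_nat.
have finj : injective f.
  move=> a b hab; apply/eqP; apply/negP => /negP hne.
  have := hsep a b hne; apply/negP; rewrite -ltNge.
  apply: norm_lt_coord => // i; rewrite !mxE.
  have := congr1 (fun g : {ffun 'I_d -> 'I_K.+1} => val (g i)) hab; rewrite /f !ffunE /=.
  rewrite inordK; last by rewrite ltnS tK.
  rewrite inordK; last by rewrite ltnS tK.
  move=> ht.
  have [ha1 ha2] : (Num.truncn (y a i))%:R <= y a i /\ y a i < (Num.truncn (y a i))%:R + 1.
    by have /andP[u v] := truncn_itv (y0 a i); rewrite natr1; split.
  have [hb1 hb2] : (Num.truncn (y b i))%:R <= y b i /\ y b i < (Num.truncn (y b i))%:R + 1.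
    by have /andP[u v] := truncn_itv (y0 b i); rewrite natr1; split.
  rewrite ht in ha1 ha2.
  have h5 : `|y a i - y b i| < 1 by rewrite ltr_norml; apply/andP; split; lra.
  have -> : q a ord0 i - q b ord0 i = e * (y a i - y b i).
    rewrite /y -mulrBl mulrC -mulrA mulVf ?gt_eqF // mulr1.
    by rewrite opprD addrACA subrr addr0.
  by rewrite normrM gtr0_norm // -{2}(mulr1 e) ltr_pM2l.
have := leq_card f finj.
by rewrite card_ffun !card_ord.
Qed.

End Grid.

Lemma bern (a M : nat) : (a ^ M * (a + M) <= a * (a + 1) ^ M)%N.
Proof.
elim: M => [|M IH]; first by rewrite expn0 mul1n addn0 muln1.
rewrite !expnS.
move: IH; move: (a ^ M)%N ((a + 1) ^ M)%N => P Q IH.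
nia.
Qed.

Section Iter.
Variables (R : realType) (d : nat) (N : 'rV[R]_d -> R).
Hypothesis hN : is_norm N.
Variables (n : nat) (p : 'I_n -> 'rV[R]_d).
Hypothesis hp2 : forall a, N (p a) <= 2.
Hypothesis hps : forall a b, a <> b -> 1 <= N (p a - p b).

Fixpoint wseq (s : seq 'I_n) : 'rV[R]_d :=
  match s with
  | [::] => 0
  | a :: s' => (5 ^ (size s').+1)%:R *: p a + wseq s'
  end.

Lemma five_pow L : (5 ^ L.+1)%:R = 5 * (5 ^ L)%:R :> R.
Proof. by rewrite expnS natrM. Qed.

Lemma w_bound s : 2 * N (wseq s) <= 5 * ((5 ^ size s)%:R - 1).
Proof.
elim: s => [|a s IH] /=; first by rewrite (N0 hN) expn0 subrr !mulr0.
have h := Ntri hN ((5 ^ (size s).+1)%:R *: p a) (wseq s).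
rewrite (NZ hN) ger0_norm // five_pow in h.
have h2 := hp2 a.
rewrite five_pow.
have hX : 0 <= (5 ^ size s)%:R :> R by [].
set X := (5 ^ size s)%:R in h IH hX *.
have h3 : 5 * X * N (p a) <= 5 * X * 2 by rewrite ler_wpM2l // mulr_ge0.
lra.
Qed.

Lemma w_sep s t : size s = size t -> s != t -> 1 <= N (wseq s - wseq t).
Proof.
elim: s t => [|a s IH] [|b t] //= [hst] hne.
case: (eqVneq a b) => [eab|nab].
  subst b.
  have hne' : s != t by apply: contra hne => /eqP ->.
  have -> : (5 ^ (size s).+1)%:R *: p a + wseq s - ((5 ^ (size t).+1)%:R *: p a + wseq t)
      = wseq s - wseq t by rewrite hst opprD addrACA subrr add0r.
  exact: IH.
have -> : (5 ^ (size s).+1)%:R *: p a + wseq s - ((5 ^ (size t).+1)%:R *: p b + wseq t)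
    = (5 ^ (size s).+1)%:R *: (p a - p b) + (wseq s - wseq t).
  by rewrite hst scalerBr opprD addrACA.
have h1 := Nrev hN ((5 ^ (size s).+1)%:R *: (p a - p b)) (wseq t - wseq s).
rewrite opprB in h1.
rewrite (NZ hN) ger0_norm // five_pow in h1.
have h2 := Ntri hN (wseq t) (- wseq s); rewrite (NN hN) in h2.
have b1 := w_bound s; have b2 := w_bound t; rewrite -hst in b2.
have h3 := hps (fun e => (negP nab) (introT eqP e)).
have hX : 1 <= (5 ^ size s)%:R :> R by rewrite ler1n expn_gt0.
set X := (5 ^ size s)%:R in h1 b1 b2 hX *.
have h4 : 5 * X * 1 <= 5 * X * N (p a - p b) by rewrite ler_wpM2l // mulr_ge0 //; lra.
rewrite five_pow -/X; lra.
Qed.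

End Iter.


Lemma theta_le (R : realType) (d : nat) (N : 'rV[R]_d -> R) (n : nat) :
  is_norm N -> (0 < d)%N -> theta_config N n -> (n <= 5 ^ d)%N.
Proof.
move=> hN hd [p [_ hp2 hps]].
have [al al0 hal] := N_ge_alpha hN hd.
have [be be0 hbe] := N_le_beta hN.
rewrite leqNgt; apply/negP => hn.
set K0 := (Num.truncn (5 * be / al)).+1.
have hK0 : 5 * be / al <= K0%:R by apply: ltW; apply: truncnS_gt.
set a := (5 ^ d)%N.
set C := (K0.+1 ^ d)%N.
set M := (C * a)%N.
have hgrid : (#|{: M.-tuple 'I_n}| <= (5 ^ M * K0).+1 ^ d)%N.
  apply: (@grid_count R d _ (fun t => wseq p (tval t))
            (5 * (5 ^ M)%:R / (2 * al)) (be^-1)).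
  - by rewrite invr_gt0.
  - move=> t; have hb := w_bound hN hp2 (tval t); rewrite size_tuple in hb.
    have ha := hal (wseq p (tval t)).
    rewrite ler_pdivlMr ?mulr_gt0 //.
    set W := wseq p (tval t) in hb ha *.
    have hX : 0 <= (5 ^ M)%:R :> R by [].
    set X := (5 ^ M)%:R in hb hX *.
    have -> : `|W| * (2 * al) = 2 * (al * `|W|) by ring.
    lra.
  - move=> t1 t2 h12.
    have hs : size (tval t1) = size (tval t2) by rewrite !size_tuple.
    have hne : tval t1 != tval t2 by apply: contra h12 => /eqP /val_inj ->.
    have h1 := w_sep hN hp2 hps hs hne.
    have h2 := hbe (wseq p (tval t1) - wseq p (tval t2)).
    rewrite -[X in X <= _]mul1r ler_pdivrMr // mulrC.
    exact: le_trans h1 h2.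
  - rewrite invrK natrM.
    have -> : 2 * (5 * (5 ^ M)%:R / (2 * al)) * be = (5 ^ M)%:R * (5 * be / al).
      by field; rewrite gt_eqF.
    by rewrite ler_wpM2l.
rewrite card_tuple card_ord in hgrid.
have h1 : ((5 ^ M * K0).+1 ^ d <= a ^ M * C)%N.
  have -> : (a ^ M * C = (5 ^ M * K0.+1) ^ d)%N.
    by rewrite /a /C expnMn -!expnM [(M * d)%N]mulnC.
  rewrite leq_exp2r //.
  by rewrite mulnS -[X in (X <= _)%N]add1n leq_add2r expn_gt0.
have M0 : (0 < M)%N by rewrite /M muln_gt0 !expn_gt0.
have h2 : ((a + 1) ^ M <= n ^ M)%N by rewrite leq_exp2r // addn1.
have h3 := bern a M.
have a0 : (0 < a)%N by rewrite expn_gt0.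
have P0 : (0 < a ^ M)%N by rewrite expn_gt0 a0.
move: (leq_trans h2 (leq_trans hgrid h1)) h3 a0 P0.
rewrite /M; move: (a ^ (C * a))%N ((a + 1) ^ (C * a))%N (n ^ (C * a))%N => P Q Nn.
move=> hQ h3 a0 P0.
nia.
Qed.

Unset Implicit Arguments.

Theorem mainTheorem1 (R : realType) (d : nat) (N : 'rV[R]_d -> R)
  (k m : nat) (c : 'I_m -> 'rV[R]_d) :
  is_norm N -> (1 <= k)%N -> (2 <= m)%N -> (k.+1 <= m)%N -> injective c ->
  exists t : nat,
    [/\ is_theta N t,
        exists u v : 'I_m, [/\ u != v,
                             (csig_deg N c k u < t * k)%N
                           & (csig_deg N c k v < t * k)%N]
      & (t * k <= 5 ^ d * k)%N].
Proof.
move=> hN hk hm hkm hc.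
have m0 : (0 < m)%N by apply: leq_trans hm.
have m1 : (1 < m)%N by [].
case: (posnP d) => [d0|dpos].
  exfalso.
  have : c (Ordinal m0) = c (Ordinal m1).
    apply/matrixP => i j; case: j => j hj; exfalso; move: hj; by rewrite d0.
  by move/hc/(congr1 val).
pose P := fun n => `[< theta_config N n >].
have exP : exists n, P n.
  exists 1%N; apply/asboolP; exists (fun _ => 0); split.
  - by exists ord0.
  - by move=> _; rewrite (N0 hN) ler0n.
  - by move=> i j; rewrite (ord1 i) (ord1 j).
have ubP : forall n, P n -> (n <= 5 ^ d)%N.
  by move=> n /asboolP; apply: theta_le.
case: (ex_maxnP exP ubP) => t /asboolP ht htmax.
have htheta : is_theta N t.
  by split => // n hn; apply: htmax; apply/asboolP.
exists t; split => //; last first.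
  by rewrite leq_mul2r (ubP t (asboolT ht)) orbT.
pose r := rk N c k.
have hT : [set: 'I_m] != finset.set0.
  by apply/finset.set0Pn; exists (Ordinal m0); rewrite inE.
case: (fin_argmin r hT) => i1 _ hmin1.
have hT2 : [set j : 'I_m | j != i1] != finset.set0.
  apply/finset.set0Pn.
  case: (eqVneq i1 (Ordinal m0)) => e.
    by exists (Ordinal m1); rewrite inE e; apply/eqP => /(congr1 val).
  by exists (Ordinal m0); rewrite inE eq_sym.
case: (fin_argmin r hT2) => i2; rewrite inE => hi2 hmin2.
exists i1, i2; split.
- by rewrite eq_sym.
- apply: (deg_bound hN hc hk hkm htheta) => j l _ _ _.
  by left; apply: hmin1; rewrite inE.
- apply: (deg_bound hN hc hk hkm htheta) => j l hjl hj hl.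
  case: (eqVneq j i1) => [ej|nj].
    right; apply: hmin2; rewrite inE; apply: contra hjl => /eqP el.
    by rewrite ej el.
  by left; apply: hmin2; rewrite inE.
Qed.
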